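(* In the setting described in the context (with any one of the three learning-rate setups (a), (b), (c)), there exists a constant $C$ such that for any $m\ge0$ and any integer $t\in[t_m,t_{m+1}]$, $$\|w_t-w_*\|\le C\big(\bar\alpha_m+\|w_{t_m}-w_*\|\big),\qquad\|w_t-w_{t_m}\|\le\bar\alpha_m\,C\,\big(\|w_{t_m}-w_*\|+1\big),$$ and furthermore, for any $t\ge0$, $$\|w_t-w_*\|\le\Big(\|w_0-w_*\|+C\sum_{\tau=0}^{t-1}\alpha_\tau\Big)\exp\Big(C\sum_{\tau=0}^{t-1}\alpha_\tau\Big).$$
   Context: Setting. $\mathcal{Y}$ is a measurable space, $\{Y_t\}$ a sequence in $\mathcal{Y}$ (a Markov chain with stationary distribution $d_{\mathcal{Y}}$). $H:\mathbb{R}^d\times\mathcal{Y}\to\mathbb{R}^d$, $h(w)=\mathbb{E}_{y\sim d_{\mathcal{Y}}}[H(w,y)]$; for some norm $\|\cdot\|$ and $\kappa\in[0,1)$, $\|h(w)-h(w')\|\le\kappa\|w-w'\|$, with fixed point $w_*$; $\|H(w,y)-H(w',y)\|\le L_h\|w-w'\|$ for all $w,w',y$ and $\sup_y\|H(0,y)\|<\infty$. Iterates: $w_0\in\mathbb{R}^d$, $w_{t+1}=w_t+\alpha_t(H(w_t,Y_{t+1})-w_t)$. Learning-rate setups with $C_\alpha>0$: (a) $\alpha_t=\frac{C_\alpha}{t+3}$, $T_m=\frac{C_\alpha\ln^{\nu_1}(m+3)}{m+3}$, $\nu_1\in(0,1)$; (b) $\alpha_t=\frac{C_\alpha}{(t+3)^\nu}$,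 $\nu\in(\frac23,1)$, $T_m=\frac{C_\alpha}{(m+3)^{\nu_2}}$, $\frac12<\nu_2<\frac\nu{2-\nu}$; (c) $\alpha_t=\frac{C_\alpha}{(t+3)\ln^\nu(t+3)}$, $\nu\in(0,1)$, $T_m=\frac{C_\alpha}{m+3}$. Anchors: $t_0=0$, $t_{m+1}=\min\{k:\sum_{t=t_m}^{k-1}\alpha_t\ge T_m\}$, and $\bar\alpha_m=\sum_{t=t_m}^{t_{m+1}-1}\alpha_t$. *)

(* Defs.v *)
From HB Require Import structures.
From mathcomp Require Import all_boot all_order all_algebra.
From mathcomp Require Import all_classical all_reals all_analysis.
Set Implicit Arguments. Unset Strict Implicit. Unset Printing Implicit Defensive.
Import Order.TTheory GRing.Theory Num.Theory.
Local Open Scope ring_scope.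

Definition is_norm (R : realType) (d : nat) (N : 'rV[R]_d -> R) : Prop :=
  [/\ forall x, 0 <= N x,
      forall x, N x = 0 -> x = 0,
      forall (a : R) x, N (a *: x) = `|a| * N x
    & forall x y, N (x + y) <= N x + N y].

Definition expect_vec (R : realType) (dY : measure_display)
    (Y : measurableType dY) (P : probability Y R) (d : nat)
    (F : Y -> 'rV[R]_d) : 'rV[R]_d :=
  \row_i Rintegral P setT (fun y => F y 0 i).

Fixpoint sa_iter (R : realType) (d : nat) (Y : Type)
    (H : 'rV[R]_d -> Y -> 'rV[R]_d) (alpha : nat -> R) (Ys : nat -> Y)
    (w0 : 'rV[R]_d) (t : nat) : 'rV[R]_d :=
  match t with
  | 0 => w0
  | t'.+1 => let w := sa_iter H alpha Ys w0 t' in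
             w + alpha t' *: (H w (Ys t'.+1) - w)
  end.

Definition lr_setup (R : realType) (alpha T : nat -> R) : Prop :=
  (exists (Ca nu1 : R), 0 < Ca /\ 0 < nu1 < 1 /\
     (forall t, alpha t = Ca / (t + 3)%:R) /\
     (forall m, T m = Ca * (ln (m + 3)%:R) `^ nu1 / (m + 3)%:R))
  \/
  (exists (Ca nu nu2 : R), 0 < Ca /\ 2/3 < nu < 1 /\ 1/2 < nu2 < nu / (2 - nu) /\
     (forall t, alpha t = Ca / (t + 3)%:R `^ nu) /\
     (forall m, T m = Ca / (m + 3)%:R `^ nu2))
  \/
  (exists (Ca nu : R), 0 < Ca /\ 0 < nu < 1 /\
     (forall t, alpha t = Ca / ((t + 3)%:R * (ln (t + 3)%:R) `^ nu)) /\
     (forall m, T m = Ca / (m + 3)%:R)).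

(* tm is the anchor sequence: t_0 = 0 and
   t_{m+1} = min { k : sum_{t = t_m}^{k-1} alpha_t >= T_m }. *)
Definition is_anchors (R : realType) (alpha T : nat -> R) (tm : nat -> nat) : Prop :=
  tm 0%N = 0%N /\
  forall m : nat,
    T m <= \sum_(tm m <= t < tm m.+1) alpha t /\
    (forall k : nat, (k < tm m.+1)%N -> \sum_(tm m <= t < k) alpha t < T m).

(* Main.v *)
Require Import Defs.
From HB Require Import structures.
From mathcomp Require Import all_boot all_order all_algebra.
From mathcomp Require Import all_classical all_reals all_analysis.
From mathcomp Require Import ring lra.
Import Order.TTheory GRing.Theory Num.Theory.
Local Open Scope ring_scope.

Lemma div_le (R : realType) (Ca D q : R) : 0 < Ca -> 0 < q -> q <= D ->
  0 <= Ca / D /\ Ca / D <= Ca / q.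
Proof.
move=> Ca0 q0 qD; have D0 : 0 < D by apply: lt_le_trans qD.
split; first by apply: divr_ge0; apply: ltW.
apply: ler_wpM2l; first exact: ltW.
by rewrite lef_pV2 // posrE.
Qed.

Lemma powR_up (R : realType) (a r x : R) : 0 < a -> 0 <= r <= 1 -> a <= x -> 1 <= x ->
  a `^ r <= x.
Proof.
move=> a0 /andP[r0 r1] ax x1.
case: (lerP 1 a) => a1.
  by apply: le_trans (ler1_powR a1 r1) ax.
apply: le_trans x1.
rewrite -(powRr0 a); apply: ger_powR => //; rewrite a0; exact: ltW.
Qed.

Lemma powR_low (R : realType) (a r q : R) : 0 < q <= 1 -> q <= a -> 0 <= r <= 1 ->
  q <= a `^ r.
Proof.
move=> /andP[q0 q1] qa /andP[r0 r1].
have a0 : 0 < a by apply: lt_le_trans qa.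
case: (lerP 1 a) => a1.
  apply: le_trans q1 _; rewrite -(powRr0 a); exact: ler_powR.
apply: le_trans qa _; apply: ger1_powR => //; rewrite a0; exact: ltW.
Qed.

Lemma pow_ge1 (R : realType) (x r : R) : 1 <= x -> 0 <= r -> 1 <= x `^ r.
Proof. move=> x1 r0; rewrite -[X in X <= _](powRr0 x); exact: ler_powR. Qed.

Lemma natx3 (R : realType) (t : nat) : 1 <= (t + 3)%:R :> R.
Proof. by rewrite ler1n addn3. Qed.

Lemma setup_bounds (R : realType) (alpha T : nat -> R) : lr_setup alpha T ->
  exists A : R, 0 <= A /\ (forall t, 0 <= alpha t /\ alpha t <= A) /\ (forall m, T m <= A).
Proof.
case=> [[Ca [nu1 [Ca0 [nu0 [ha hT]]]]]|[[Ca [nu [nu2 [Ca0 [nu0 [nu20 [ha hT]]]]]]]|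
   [Ca [nu [Ca0 [nu0 [ha hT]]]]]]].
- exists Ca; split; first exact: ltW.
  split=> [t|m].
    rewrite ha; have := @div_le R Ca (t + 3)%:R 1 Ca0 ltr01 (natx3 R t).
    by rewrite divr1.
  rewrite hT ler_pdivrMr; last by apply: lt_le_trans (natx3 R m).
  apply: ler_wpM2l; first exact: ltW.
  have x1 := natx3 R m.
  apply: powR_up => //.
  + by apply: ln_gt0; rewrite ltr1n addn3.
  + case/andP: nu0 => a b; rewrite (ltW a) (ltW b) //.
  + apply: ltW; apply: ln_sublinear; apply: lt_le_trans x1; exact: ltr01.
- have nup : 0 <= nu by case/andP: nu0 => a _; apply: le_trans (ltW a); lra.
  have nu2p : 0 <= nu2 by case/andP: nu20 => a _; apply: le_trans (ltW a); lra.
  exists Ca; split; first exact: ltW.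
  split=> [t|m].
    rewrite ha; have := @div_le R Ca ((t + 3)%:R `^ nu) 1 Ca0 ltr01.
    by rewrite divr1; apply; apply: pow_ge1 (natx3 R t) nup.
  rewrite hT; have := @div_le R Ca ((m + 3)%:R `^ nu2) 1 Ca0 ltr01.
  rewrite divr1 => h; apply: (proj2 (h _)).
  exact: pow_ge1 (natx3 R m) nu2p.
- set q := Num.min 1 (ln (3%:R : R)).
  have l30 : 0 < ln (3%:R : R) by apply: ln_gt0; rewrite ltr1n.
  have q0 : 0 < q <= 1 by rewrite /q lt_min ltr01 l30 ge_min lexx.
  have q1 : q <= 1 by case/andP: q0.
  have qp : 0 < q by case/andP: q0.
  exists (Ca / q); split; first by apply: divr_ge0; apply: ltW.
  split=> [t|m].
    rewrite ha; apply: div_le => //.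
    have hl : q <= ln (t + 3)%:R `^ nu.
      apply: powR_low => //.
        rewrite /q ge_min; apply/orP; right.
        by rewrite ler_ln ?posrE ?ltr0n ?addn3 // ler_nat !ltnS.
      case/andP: nu0 => a b; rewrite (ltW a) (ltW b) //.
    rewrite -[q]mul1r; apply: ler_pM => //; [exact: ltW | exact: natx3].
  rewrite hT; have [_ h] := @div_le R Ca (m + 3)%:R 1 Ca0 ltr01 (natx3 R m).
  apply: le_trans h _; rewrite divr1 ler_pdivlMr // ler_piMr //; exact: ltW.
Qed.
Lemma growth (R : realType) (x a : nat -> R) (c b : R) (n0 : nat) :
  0 <= c -> 0 <= b -> (forall k, 0 <= a k) -> 0 <= x n0 ->
  (forall k, (n0 <= k)%N -> x k.+1 <= x k * (1 + c * a k) + c * a k * b) ->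
  forall k, x (n0 + k)%N <= (x n0 + c * b * \sum_(n0 <= j < n0 + k) a j)
                            * expR (c * \sum_(n0 <= j < n0 + k) a j).
Proof.
move=> c0 b0 a0 x0 rec; elim=> [|k IH].
  by rewrite addn0 big_geq // !mulr0 addr0 expR0 mulr1.
rewrite addnS big_nat_recr ?leq_addr //=.
set S := \sum_(n0 <= j < n0 + k) a j.
have S0 : 0 <= S by apply: sumr_ge0.
have ak := a0 (n0 + k)%N.
set A := a (n0 + k)%N in ak *.
have E1 : 1 <= expR (c * S) by rewrite -expR0 ler_expR mulr_ge0.
have E2 : 1 + c * A <= expR (c * A) by apply: expR_ge1Dx.
set e1 := expR (c * S) in E1 IH *.
rewrite [c * (S + A)]mulrDr expRD -/e1.
set e2 := expR (c * A) in E2 *.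
have P0 : 0 <= (x n0 + c * b * S) * e1.
  apply: mulr_ge0; last lra. apply: addr_ge0 => //; apply: mulr_ge0 => //; exact: mulr_ge0.
have cA : 0 <= c * A by apply: mulr_ge0.
have cAb : 0 <= c * A * b by apply: mulr_ge0.
apply: le_trans (rec _ (leq_addr _ _)) _.
have h1 : x (n0 + k)%N * (1 + c * A) <= (x n0 + c * b * S) * e1 * (1 + c * A).
  by apply: ler_wpM2r => //; lra.
have h2 : (x n0 + c * b * S) * e1 * (1 + c * A) <= (x n0 + c * b * S) * e1 * e2.
  by apply: ler_wpM2l.
have h3 : c * A * b <= c * A * b * (e1 * e2).
  rewrite -{1}(mulr1 (c * A * b)); apply: ler_wpM2l => //.
  have : 1 <= e2 by lra.
  move=> ?; nra.
have -> : (x n0 + c * b * (S + A)) * (e1 * e2) =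
   (x n0 + c * b * S) * e1 * e2 + c * A * b * (e1 * e2) by ring.
by apply: lerD => //; apply: le_trans h1 h2.
Qed.

Theorem lemma16 (R : realType) (d : nat)
  (dY : measure_display) (Yt : measurableType dY) (dist : probability Yt R)
  (N : 'rV[R]_d -> R) (H : 'rV[R]_d -> Yt -> 'rV[R]_d)
  (kappa L_h : R) (w_star : 'rV[R]_d)
  (alpha T : nat -> R) (tm : nat -> nat) (w0 : 'rV[R]_d) :
  is_norm N ->
  (forall w (i : 'I_1) (j : 'I_d), measurable_fun setT (fun y => H w y i j)) ->
  0 <= kappa < 1 ->
  (forall w w', N (expect_vec dist (H w) - expect_vec dist (H w'))
                  <= kappa * N (w - w')) ->
  expect_vec dist (H w_star) = w_star ->
  (forall w w' y, N (H w y - H w' y) <= L_h * N (w - w')) ->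
  (exists B : R, forall y, N (H 0 y) <= B) ->
  lr_setup alpha T ->
  is_anchors alpha T tm ->
  exists C : R, forall Ys : nat -> Yt,
    let w := sa_iter H alpha Ys w0 in
    let abar := fun m => \sum_(tm m <= t < tm m.+1) alpha t in
    (forall (m t : nat), (tm m <= t <= tm m.+1)%N ->
        N (w t - w_star) <= C * (abar m + N (w (tm m) - w_star)) /\
        N (w t - w (tm m)) <= abar m * C * (N (w (tm m) - w_star) + 1)) /\
    (forall t : nat,
        N (w t - w_star) <=
          (N (w0 - w_star) + C * \sum_(0 <= tau < t) alpha tau)
          * expR (C * \sum_(0 <= tau < t) alpha tau)).
Proof.
move=> [Nge0 Neq0 NZ Ntri] _ _ _ _ HL [B HB] hset [tm0 anch].
have [A [A0 [hal hTA]]] := @setup_bounds _ _ _ hset.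
have al0 : forall t, 0 <= alpha t by move=> t; case: (hal t).
have N00 : N 0 = 0 by rewrite -(scale0r (0 : 'rV[R]_d)) NZ normr0 mul0r.
have Nopp : forall x, N (- x) = N x.
  by move=> x; rewrite -scaleN1r NZ normrN1 mul1r.
have Nsub : forall x y z, N (x - y) <= N (x - z) + N (z - y).
  move=> x y z; have -> : x - y = (x - z) + (z - y) by rewrite addrA subrK.
  exact: Ntri.
set l := `|L_h|.
have l0 : 0 <= l by apply: normr_ge0.
have HL' : forall w w' y, N (H w y - H w' y) <= l * N (w - w').
  move=> w w' y; apply: le_trans (HL w w' y) _; apply: ler_wpM2r => //; exact: ler_norm.
set nst := N w_star.
have nst0 : 0 <= nst by apply: Nge0.
set c := (l + 1) * (1 + nst) + `|B|.
have c0 : 0 <= c by apply: addr_ge0; [apply: mulr_ge0; lra | apply: normr_ge0].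
have key : forall w z y, N (H w y - w) <= c * N (w - z) + c * (N (z - w_star) + 1).
  move=> w z y.
  have h1 := Nsub (H w y) w (H z y).
  have h2 := Nsub (H z y) w (H 0 y).
  have h3 : N (H 0 y - w) <= N (H 0 y) + N w by rewrite -(Nopp w); apply: Ntri.
  have h4 : N w <= N (w - z) + N z.
    have -> : N w = N ((w - z) + z) by rewrite subrK.
    exact: Ntri.
  have h5 : N z <= N (z - w_star) + nst.
    have -> : N z = N ((z - w_star) + w_star) by rewrite subrK.
    exact: Ntri.
  have h6 := HL' w z y.
  have h7 : N (H z y - H 0 y) <= l * N z by rewrite -{2}(subr0 z); apply: HL'.
  have h8 := HB y.
  have u0 := Nge0 (w - z); have v0 := Nge0 (z - w_star); have z0 := Nge0 z.
  have hB : B <= `|B| by apply: ler_norm.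
  have p1 : 0 <= (l + 1) * nst * (N (w - z) + N (z - w_star)).
    by apply: mulr_ge0; [apply: mulr_ge0; lra | lra].
  have p2 : 0 <= `|B| * (N (w - z) + N (z - w_star)).
    by apply: mulr_ge0; [apply: normr_ge0 | lra].
  have p3 : l * N z <= l * (N (z - w_star) + nst) by apply: ler_wpM2l.
  have p4 : 0 <= l * N (w - z) by apply: mulr_ge0.
  have p5 : 0 <= l * N (z - w_star) by apply: mulr_ge0.
  rewrite /c; nra.
have abarA : forall m, \sum_(tm m <= t < tm m.+1) alpha t <= A + A.
  move=> m.
  case: (ltnP (tm m) (tm m.+1)) => hlt; last by rewrite big_geq //; lra.
  have ek : tm m.+1 = (tm m.+1).-1.+1 by rewrite prednK //; apply: leq_ltn_trans hlt.
  rewrite ek big_nat_recr /=; last by rewrite -ltnS -ek.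
  have h1 : \sum_(tm m <= t < (tm m.+1).-1) alpha t < T m.
    by apply: (proj2 (anch m)); rewrite {2}ek ltnSn.
  have := hTA m; have := hal (tm m.+1).-1; case=> _ ?; lra.
have abar0 : forall m, 0 <= \sum_(tm m <= t < tm m.+1) alpha t by move=> m; apply: sumr_ge0.
set C0 := c * expR (c * (A + A)).
have C00 : 0 <= C0 by apply: mulr_ge0 => //; apply: expR_ge0.
exists (c + C0 + 1 + (A + A) * C0).
move=> Ys w abar.
have step : forall z k, N (w k.+1 - z) <=
    N (w k - z) * (1 + c * alpha k) + c * alpha k * (N (z - w_star) + 1).
  move=> z k.
  have -> : w k.+1 - z = (w k - z) + alpha k *: (H (w k) (Ys k.+1) - w k).
    by rewrite /w /= addrAC.
  apply: le_trans (Ntri _ _) _.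
  rewrite NZ ger0_norm //.
  have := key (w k) z (Ys k.+1).
  have := al0 k; set a := alpha k; set X := N (H _ _ - _) => a0 hk.
  have : a * X <= a * (c * N (w k - z) + c * (N (z - w_star) + 1)) by apply: ler_wpM2l.
  move=> ?; nra.
split.
  move=> m t /andP[h1 h2].
  set e := N (w (tm m) - w_star).
  have e0 : 0 <= e by apply: Nge0.
  have b0 : 0 <= e + 1 by lra.
  have G := @growth R (fun k => N (w k - w (tm m))) alpha c (e + 1) (tm m) c0 b0 al0
     (Nge0 _) (fun k _ => step (w (tm m)) k) (t - tm m).
  rewrite /= subnKC // subrr N00 add0r in G.
  set S := \sum_(tm m <= j < t) alpha j in G.
  have S0 : 0 <= S by apply: sumr_ge0.
  have Sab : S <= abar m.
    rewrite /abar (big_cat_nat h1 h2) /= lerDl; exact: sumr_ge0.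
  have ab0 : 0 <= abar m by apply: abar0.
  have abA : abar m <= A + A by apply: abarA.
  set D := N (w t - w (tm m)) in G *.
  have hD : D <= abar m * C0 * (e + 1).
    apply: le_trans G _.
    have q : S * expR (c * S) <= abar m * expR (c * (A + A)).
      apply: (ler_pM S0 (expR_ge0 _) Sab).
      by rewrite ler_expR; apply: ler_wpM2l => //; apply: le_trans Sab abA.
    have -> : c * (e + 1) * S * expR (c * S) = c * (e + 1) * (S * expR (c * S)) by ring.
    have -> : abar m * C0 * (e + 1) = c * (e + 1) * (abar m * expR (c * (A + A))) by rewrite /C0; ring.
    by apply: ler_wpM2l => //; apply: mulr_ge0.
  have hC : C0 <= c + C0 + 1 + (A + A) * C0.
    have : 0 <= (A + A) * C0 by apply: mulr_ge0 => //; lra.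
    lra.
  split.
    have t1 : N (w t - w_star) <= D + e by apply: Nsub.
    have p1 : abar m * C0 * e <= (A + A) * C0 * e.
      by apply: ler_wpM2r => //; apply: ler_wpM2r.
    have p2 : 0 <= c * abar m by apply: mulr_ge0.
    have p3 : 0 <= (A + A) * C0 * abar m by apply: mulr_ge0 => //; apply: mulr_ge0 => //; lra.
    have p4 : 0 <= c * e by apply: mulr_ge0.
    have p5 : 0 <= C0 * e by apply: mulr_ge0.
    nra.
  apply: le_trans hD _; apply: ler_wpM2r => //; apply: ler_wpM2l => //.
move=> t.
have b0 : 0 <= N (w_star - w_star) + 1 by have := Nge0 (w_star - w_star); lra.
have G := @growth R (fun k => N (w k - w_star)) alpha c _ 0 c0 b0 al0
     (Nge0 _) (fun k _ => step w_star k) t.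
rewrite /= add0n subrr N00 add0r mulr1 in G.
apply: le_trans G _.
set S := \sum_(0 <= j < t) alpha j.
have S0 : 0 <= S by apply: sumr_ge0.
have hC : c <= c + C0 + 1 + (A + A) * C0.
  have : 0 <= (A + A) * C0 by apply: mulr_ge0 => //; lra.
  lra.
apply: ler_pM.
+ by apply: addr_ge0; [apply: Nge0 | apply: mulr_ge0].
+ exact: expR_ge0.
+ by rewrite lerD2l; apply: ler_wpM2r.
+ by rewrite ler_expR; apply: ler_wpM2r.
Qed.
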